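(* Let $L \subseteq \Sigma^*$ be regular and $k\ge0$. Then $L$ is a Boolean combination of at most $k$ regular left ideals if and only if $\mathrm{alt}_L(x) \le k$ for all $x \in \Sigma^*$.
   Context: A language $P\subseteq\Sigma^*$ is a left ideal if $\Sigma^*P\subseteq P$. For $x=a_1\cdots a_n\in\Sigma^*$, a position $1\le i\le n$ is an $L$-alternation point if exactly one of the words $a_i\cdots a_n$ and $a_{i+1}\cdots a_n$ belongs to $L$; $\mathrm{alt}_L(x)$ is the number of $L$-alternation points of $x$. *)

(* Defs.v *)
From mathcomp Require Import all_boot.
Set Implicit Arguments. Unset Strict Implicit. Unset Printing Implicit Defensive.

Definition lang (Sigma : finType) := seq Sigma -> bool.

Definition regular (Sigma : finType) (L : lang Sigma) : Prop :=
  exists (Q : finType) (q0 : Q) (delta : Q -> Sigma -> Q) (F : pred Q),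
    forall x : seq Sigma, L x = F (foldl delta q0 x).

Definition left_ideal (Sigma : finType) (P : lang Sigma) : Prop :=
  forall u x : seq Sigma, P x -> P (u ++ x).

Definition bool_comb (Sigma : finType) (m : nat) (P : 'I_m -> lang Sigma)
    (L : lang Sigma) : Prop :=
  exists f : ('I_m -> bool) -> bool, forall x : seq Sigma, L x = f (fun i => P i x).

(* alt_L(x): number of positions i (1 <= i <= n) such that exactly one of
   a_i...a_n = drop (i-1) x and a_(i+1)...a_n = drop i x belongs to L. *)
Definition alt (Sigma : finType) (L : lang Sigma) (x : seq Sigma) : nat :=
  \sum_(i < size x) (L (drop i x) != L (drop i.+1 x)).

(* Main.v *)
Require Import Defs.
From mathcomp Require Import all_boot.
From mathcomp Require Import zify.
From Stdlib Require Import FunctionalExtensionality.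
Set Implicit Arguments. Unset Strict Implicit. Unset Printing Implicit Defensive.

Lemma altS (Sigma : finType) (L : lang Sigma) a x :
  alt L (a :: x) = (L (a :: x) != L x) + alt L x.
Proof. by rewrite /alt /= big_ord_recl /= drop0. Qed.

Lemma alt_parity (Sigma : finType) (L : lang Sigma) x :
  L x = L [::] (+) odd (alt L x).
Proof.
elim: x => [|a x IH]; first by rewrite /alt big_ord0 /= addbF.
rewrite altS oddD IH.
by case: (L (a :: x)); case: (L [::]); case: (odd (alt L x)); rewrite ?IH.
Qed.

Lemma alt_mono (Sigma : finType) (L : lang Sigma) u x : alt L x <= alt L (u ++ x).
Proof. elim: u => [|a u IH] //=; rewrite altS; exact: leq_trans IH (leq_addl _ _). Qed.

Lemma sum_lt n k : \sum_(i < k) (i < n : nat) = minn n k.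
Proof.
elim: k => [|k IH]; first by rewrite big_ord0; lia.
rewrite big_ord_recr /= IH; case: ltnP => H; lia.
Qed.

Lemma drop_rcons_le (T : Type) (x : seq T) a i :
  i <= size x -> drop i (rcons x a) = rcons (drop i x) a.
Proof.
move=> H; rewrite -!cats1 drop_cat.
case: ltnP => H2 //.
have -> : i = size x by apply/eqP; rewrite eqn_leq H H2.
by rewrite subnn drop_size.
Qed.

Section Cnt.
Variables (Sigma Q0 : finType) (q0 : Q0) (d0 : Q0 -> Sigma -> Q0).

Definition cnt (h : {ffun Q0 -> bool}) (x : seq Sigma) : nat :=
  \sum_(i < size x) (h (foldl d0 q0 (drop i x)) != h (foldl d0 q0 (drop i.+1 x))).

Lemma cnt_rcons h x a :
  cnt h (rcons x a) = cnt [ffun q => h (d0 q a)] x + (h (d0 q0 a) != h q0).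
Proof.
rewrite /cnt size_rcons big_ord_recr /=; congr (_ + _).
  apply: eq_bigr => i _.
  rewrite !drop_rcons_le ?(ltnW (ltn_ord i)) ?ltn_ord // !foldl_rcons !ffunE //.
rewrite drop_rcons_le // drop_size drop_oversize ?size_rcons //.
Qed.

Variable k : nat.
Definition dstate := {ffun {ffun Q0 -> bool} -> 'I_k.+1}.
Definition ddelta (s : dstate) (a : Sigma) : dstate :=
  [ffun h : {ffun Q0 -> bool} => inord (minn k (s [ffun q => h (d0 q a)] + (h (d0 q0 a) != h q0)))].
Definition dstart : dstate := [ffun h : {ffun Q0 -> bool} => inord 0].

Lemma dfold x : foldl ddelta dstart x = [ffun h => inord (minn k (cnt h x))].
Proof.
elim/last_ind: x => [|x a IH].
  by apply/ffunP => h; rewrite /= !ffunE /cnt big_ord0 minn0.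
rewrite foldl_rcons IH; apply/ffunP => h; rewrite !ffunE cnt_rcons inordK; last first.
  by rewrite ltnS geq_minl.
congr inord; lia.
Qed.
End Cnt.

Theorem lemma5p12 (Sigma : finType) (L : lang Sigma) (k : nat) :
  regular L ->
  ((exists m : nat, m <= k /\
      exists P : 'I_m -> lang Sigma,
        (forall i, regular (P i) /\ left_ideal (P i)) /\ bool_comb P L)
   <-> (forall x : seq Sigma, alt L x <= k)).
Proof.
move=> [Q0 [q0 [d0 [F0 HL]]]]; split.
  move=> [m [Hm [P [HP [f Hf]]]]] x.
  suff H : alt L x <= \sum_(i < m) P i x.
    apply: (leq_trans H); apply: (leq_trans _ Hm).
    apply: (@leq_trans (\sum_(i < m) 1)); first by apply: leq_sum => i _; apply: leq_b1.
    by rewrite sum1_card card_ord.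
  elim: x => [|a x IH]; first by rewrite /alt big_ord0.
  have mono : forall i, P i x -> P i (a :: x).
    by move=> i Hi; have := (proj2 (HP i)) [:: a] x Hi.
  rewrite altS.
  case: (boolP (L (a :: x) != L x)) => Hne; last first.
    rewrite add0n; apply: leq_trans IH _; apply: leq_sum => i _.
    by case: (P i x) (mono i) => // ->.
  have [i Hi] : exists i : 'I_m, P i x != P i (a :: x).
    apply/existsP; apply: contraR Hne => /existsPn Hall.
    rewrite !Hf; apply/eqP; congr f; apply: functional_extensionality => i.
    by have := Hall i; rewrite negbK => /eqP ->.
  have Pi1 : P i (a :: x) by move: (mono i) Hi; case: (P i x); case: (P i (a :: x)) => // /(_ isT).
  have Pi0 : P i x = false by move: Hi; rewrite Pi1; case: (P i x).
  rewrite (bigD1 i) //= Pi1 add1n ltnS.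
  rewrite (bigD1 i) //= Pi0 add0n in IH.
  apply: leq_trans IH _; apply: leq_sum => j _.
  by case: (P j x) (mono j) => // ->.
move=> Hk; exists k; split => //.
exists (fun (i : 'I_k) x => i < alt L x); split.
  move=> i; split; last first.
    move=> u x /= H; exact: leq_trans H (alt_mono L u x).
  exists (dstate Q0 k), (dstart Q0 k), (ddelta q0 d0 (k:=k)),
         (fun s : dstate Q0 k => i < s [ffun q => F0 q]).
  move=> x; rewrite dfold ffunE inordK; last by rewrite ltnS geq_minl.
  have -> : cnt q0 d0 [ffun q => F0 q] x = alt L x.
    by apply: eq_bigr => j _; rewrite !ffunE !HL.
  by rewrite (minn_idPr (Hk x)).
exists (fun v => L [::] (+) odd (\sum_(i < k) v i)) => x.
by rewrite sum_lt (minn_idPl (Hk x)) -alt_parity.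
Qed.
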